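(* Let $I$ be a finite tree and let $\Sigma_{i_1}\Sigma_{i_2}\cdots\Sigma_{i_p}$ be a reduced expression for a morphism of $R_0(I)$ from an arbitrary orientation of $I$ to $\Gamma_0$ or $\Gamma_0^{\mathrm{op}}$. Then for every letter $i$ occurring in the word $i_1\cdots i_p$, exactly one of the following holds: (i) no $j$ adjacent to $i$ occurs to the left of the leftmost occurrence of $i$; (ii) every $j$ adjacent to $i$ occurs exactly once to the left of the leftmost occurrence of $i$.
   Context: Let $I$ be a finite tree. $\mathrm{Quiv}(I)$ is the set of orientations of $I$; $\Gamma_0$ is an alternating orientation (every vertex a source or sink) and $\Gamma_0^{\mathrm{op}}$ its opposite. For $\Gamma\in\mathrm{Quiv}(I)$ and a source or sink $i$ of $\Gamma$, $s_i\Gamma$ is the orientation obtained by reversing all arrows at $i$. The groupoid $R_0(I)$ has object set $\mathrm{Quiv}(I)$ and is generated by elementary isomorphisms $\Sigma_i:\Gamma\to s_i\Gamma$ (for each $\Gamma$ and each source or sink $i$ of $\Gamma$) subject to the relations, whenever both sides are defined: (R1) $\Sigma_i^2=1$; (R2) $\Sigma_i\Sigma_j=\Sigma_j\Sigma_i$ when $i,j$ are not adjacent. Composition is right-to-left, so in $\Sigma_{i_1}\cdots\Sigma_{i_p}$ the rightmost factor $\Sigma_{i_p}$ is applied first and the leftmost factor $\Sigma_{i_1}$ last. An expression for a morphism $\Sigma$ is a composable word equal to $\Sigma$; $\ell(\Sigma)$ is the minimal length of an expression, and an expression of length $\ell(\Sigma)$ is called reduced. *)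

(* Defs.v *)
From Stdlib Require Import Relations.
From mathcomp Require Import all_boot.
Set Implicit Arguments. Unset Strict Implicit. Unset Printing Implicit Defensive.

Section Quivers.
Variables (V : finType) (adj : rel V).

(** A finite tree: the graph (V, adj) is simple (symmetric, irreflexive),
    connected and has no cycle (a cycle = closed path through >= 3 distinct
    vertices). *)
Definition is_tree : Prop :=
  [/\ symmetric adj, irreflexive adj,
      (forall x y, connect adj x y) &
      (forall x p, path adj x p -> uniq (x :: p) -> 2 <= size p ->
                   ~~ adj (last x p) x)].

(** A (candidate) quiver on V: o (x,y) = true means there is an arrow x -> y. *)
Definition quiv := {ffun V * V -> bool}.

Definition is_orient (o : quiv) : Prop :=
  (forall x y, o (x, y) -> adj x y) /\
  (forall x y, adj x y -> o (x, y) != o (y, x)).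

Definition is_source (o : quiv) (i : V) : bool := [forall j, adj i j ==> o (i, j)].
Definition is_sink (o : quiv) (i : V) : bool := [forall j, adj i j ==> o (j, i)].
Definition src_or_sink (o : quiv) (i : V) : bool := is_source o i || is_sink o i.

Definition refl_at (o : quiv) (i : V) : quiv :=
  [ffun p : V * V => if (p.1 == i) || (p.2 == i) then o (p.2, p.1) else o p].

Definition opp (o : quiv) : quiv := [ffun p : V * V => o (p.2, p.1)].

Definition alternating (o : quiv) : Prop := forall i, src_or_sink o i.

(** Words: the list [:: i_1; ...; i_p] stands for Sigma_{i_1} ... Sigma_{i_p};
    composition is right-to-left, so i_p is applied first.  [run o w] is
    [Some] of the target orientation if the word is composable starting at o,
    and [None] otherwise. *)
Fixpoint run (o : quiv) (w : seq V) : option quiv :=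
  match w with
  | [::] => Some o
  | i :: w' =>
      match run o w' with
      | Some o' => if src_or_sink o' i then Some (refl_at o' i) else None
      | None => None
      end
  end.

Definition composable (o : quiv) (w : seq V) : bool := run o w != None.

Inductive rstep (G : quiv) : seq V -> seq V -> Prop :=
  | rstep_R1 w1 w2 i :
      composable G (w1 ++ [:: i; i] ++ w2) ->
      composable G (w1 ++ w2) ->
      rstep G (w1 ++ [:: i; i] ++ w2) (w1 ++ w2)
  | rstep_R2 w1 w2 i j :
      ~~ adj i j ->
      composable G (w1 ++ [:: i; j] ++ w2) ->
      composable G (w1 ++ [:: j; i] ++ w2) ->
      rstep G (w1 ++ [:: i; j] ++ w2) (w1 ++ [:: j; i] ++ w2).

Definition same_morph (G : quiv) : relation (seq V) :=
  clos_refl_sym_trans (seq V) (rstep G).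

Definition reduced (G : quiv) (w : seq V) : Prop :=
  composable G w /\
  forall w', composable G w' -> same_morph G w w' -> size w <= size w'.

End Quivers.

(* Main.v *)
Require Import Defs.
From Stdlib Require Import Relations.
From mathcomp Require Import all_boot.
From mathcomp Require Import zify.
Set Implicit Arguments. Unset Strict Implicit. Unset Printing Implicit Defensive.

Lemma run_cat (V : finType) (adj : rel V) o u v :
  run adj o (u ++ v) = obind (fun o' => run adj o' u) (run adj o v).
Proof.
elim: u => [|x u IH] /=; first by case: (run adj o v).
by rewrite IH; case: (run adj o v).
Qed.

Lemma refl_refl (V : finType) (o : quiv V) j : refl_at (refl_at o j) j = o.
Proof.
apply/ffunP => -[x y]; rewrite !ffunE /=.
by case: (x == j) (y == j) => [] [] /=.
Qed.

Lemma refl_comm (V : finType) (o : quiv V) i j :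
  refl_at (refl_at o j) i = refl_at (refl_at o i) j.
Proof.
apply/ffunP => -[x y]; rewrite !ffunE /=.
by case: (x == j) (y == j) (x == i) (y == i) => [] [] [] [].
Qed.

Lemma sos_refl_same (V : finType) (adj : rel V) o j :
  src_or_sink adj o j -> src_or_sink adj (refl_at o j) j.
Proof.
rewrite /src_or_sink /is_source /is_sink => /orP [] /forallP H; apply/orP.
- right; apply/forallP => k; apply/implyP => a.
  by rewrite ffunE /= eqxx orbT; move/implyP: (H k); apply.
- left; apply/forallP => k; apply/implyP => a.
  by rewrite ffunE /= eqxx; move/implyP: (H k); apply.
Qed.

Lemma sos_refl_other (V : finType) (adj : rel V) o i j :
  i != j -> ~~ adj i j -> src_or_sink adj (refl_at o j) i = src_or_sink adj o i.
Proof.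
move=> nij na; rewrite /src_or_sink /is_source /is_sink.
congr orb; apply: eq_forallb => k; rewrite ffunE /= (negbTE nij) /=;
case: (eqVneq k j) => [->|_] //=; by rewrite (negbTE na).
Qed.

Lemma run_swap (V : finType) (adj : rel V) o i j w1 w2 :
  symmetric adj -> ~~ adj i j ->
  run adj o (w1 ++ [:: i; j] ++ w2) = run adj o (w1 ++ [:: j; i] ++ w2).
Proof.
move=> sym na; rewrite !(run_cat _ _ w1); congr obind.
case: (eqVneq i j) => [->//|nij].
rewrite /=; case: (run adj o w2) => //= o'.
have na' : ~~ adj j i by rewrite sym.
have nji : j != i by rewrite eq_sym.
case Hj: (src_or_sink adj o' j); case Hi: (src_or_sink adj o' i) => /=;
  rewrite ?(sos_refl_other _ nij na) ?(sos_refl_other _ nji na') ?Hi ?Hj //=.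
by rewrite refl_comm.
Qed.

Lemma run_R1 (V : finType) (adj : rel V) o j w1 w2 :
  composable adj o (w1 ++ [:: j; j] ++ w2) ->
  run adj o (w1 ++ w2) = run adj o (w1 ++ [:: j; j] ++ w2).
Proof.
rewrite /composable !(run_cat _ _ w1) /=; case: (run adj o w2) => //= o'.
case H: (src_or_sink adj o' j) => //=.
by rewrite (sos_refl_same H) refl_refl.
Qed.

Lemma run_orient (V : finType) (adj : rel V) o u o' :
  symmetric adj -> is_orient adj o -> run adj o u = Some o' -> is_orient adj o'.
Proof.
move=> sym; elim: u o' => [|x u IH] o' Ho /=; first by case=> <-.
case R: (run adj o u) => [o1|] //; case: ifP => // _ [<-].
have [H1 H2] := IH _ Ho R; split.
- move=> a b; rewrite ffunE /=; case: ifP => _ h.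
  + by rewrite sym; apply: H1.
  + by apply: H1.
- move=> a b ab; rewrite !ffunE /= orbC; case: ifP => _.
  + by rewrite eq_sym; apply: H2.
  + by apply: H2.
Qed.

Lemma run_edges (V : finType) (adj : rel V) o u o' x :
  x \notin u -> run adj o u = Some o' ->
  forall y, (o' (x, y), o' (y, x)) =
    if odd (count_mem y u) then (o (y, x), o (x, y)) else (o (x, y), o (y, x)).
Proof.
elim: u o' => [|a u IH] o' /=; first by move=> _ [<-] y.
rewrite in_cons negb_or => /andP [xa xu].
case R: (run adj o u) => [o1|] //; case: ifP => // _ [<-] y.
rewrite !ffunE /= (negbTE xa) /= orbF; have := IH _ xu R y.
case: (eqVneq a y) => [<-|ay]; rewrite ?eqxx /=.
- by rewrite add0n; case: ifP => _ [-> ->].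
- by rewrite add0n.
Qed.
Lemma sos_break (V : finType) (adj : rel V) o u o' x a b :
  is_orient adj o -> src_or_sink adj o x -> x \notin u -> run adj o u = Some o' ->
  adj x a -> adj x b -> count_mem a u = 1 -> count_mem b u = 0 ->
  ~~ src_or_sink adj o' x.
Proof.
move=> [_ Or] Hs xu R xa xb ca cb.
have := run_edges xu R a; rewrite ca /= => -[Ea1 Ea2].
have := run_edges xu R b; rewrite cb /= => -[Eb1 Eb2].
have Oa := Or _ _ xa; have Ob := Or _ _ xb.
have Src : forall q : quiv V, is_source adj q x -> q (x, a) && q (x, b).
  by move=> q /forallP H; rewrite (implyP (H a) xa) (implyP (H b) xb).
have Snk : forall q : quiv V, is_sink adj q x -> q (a, x) && q (b, x).
  by move=> q /forallP H; rewrite (implyP (H a) xa) (implyP (H b) xb).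
move: Hs; rewrite /src_or_sink => /orP [/Src|/Snk] /andP [h1 h2];
apply/negP => /orP [/Src|/Snk]; rewrite ?Ea1 ?Ea2 ?Eb1 ?Eb2 => /andP [h3 h4];
by move: Oa Ob; rewrite ?h1 ?h2 ?h3 ?h4.
Qed.
Lemma split1 (T : eqType) (k : T) s : k \in s ->
  s = take (index k s) s ++ k :: drop (index k s).+1 s /\ k \notin take (index k s) s.
Proof.
move=> ks; split; first by rewrite -drop_index // cat_take_drop.
by rewrite in_take_leq ?index_size // ltnn.
Qed.

Lemma split2 (T : eqType) (k : T) s : 1 < count_mem k s ->
  exists s1 s2 s3, s = s1 ++ k :: s2 ++ k :: s3 /\ k \notin s2.
Proof.
move=> c; have ks : k \in s by rewrite -has_pred1 has_count (ltn_trans _ c).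
have [E1 _] := split1 ks; set r := drop _ s in E1.
have kr : k \in r.
  move: c; rewrite E1 count_cat /= eqxx.
  have := split1 ks; case=> _ /count_memPn -> /=.
  by rewrite add1n ltnS -has_pred1 has_count.
have [E2 N2] := split1 kr.
exists (take (index k s) s), (take (index k r) r), (drop (index k r).+1 r).
by split => //; rewrite {1}E1 {1}E2.
Qed.

Lemma run_commute (V : finType) (adj : rel V) o j b a c :
  symmetric adj -> all (fun x => ~~ adj j x) b ->
  run adj o (a ++ j :: b ++ c) = run adj o (a ++ b ++ j :: c).
Proof.
move=> sym; elim: b a => [|x b IH] a //= /andP [nx nb].
have := run_swap o a (b ++ c) sym nx; rewrite /= => ->.
by have := IH (a ++ [:: x]) nb; rewrite -!catA /= => ->.
Qed.

Lemma sm_commute (V : finType) (adj : rel V) G j b a c :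
  symmetric adj -> all (fun x => ~~ adj j x) b ->
  composable adj G (a ++ j :: b ++ c) ->
  same_morph adj G (a ++ j :: b ++ c) (a ++ b ++ j :: c).
Proof.
move=> sym; elim: b a => [|x b IH] a /=; first by move=> _ _; apply: rst_refl.
move=> /andP [nx nb] Co.
have Co' : composable adj G (a ++ [:: x; j] ++ (b ++ c)).
  by rewrite /composable -run_swap.
apply: rst_trans; first by apply: rst_step; apply: (rstep_R2 nx Co Co').
have := IH (a ++ [:: x]) nb; rewrite -!catA /=; apply.
by move: Co'; rewrite /= .
Qed.
Lemma split_run (V : finType) (adj : rel V) o u x v :
  composable adj o (u ++ x :: v) -> exists o1, run adj o v = Some o1 /\
  src_or_sink adj o1 x /\ run adj o (x :: v) = Some (refl_at o1 x) /\
  run adj o (u ++ x :: v) = run adj (refl_at o1 x) u.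
Proof.
rewrite /composable run_cat /=; case: (run adj o v) => //= o1.
by case: ifP => //= H _; exists o1.
Qed.

Lemma reduce_base (V : finType) (adj : rel V) G a b c j :
  symmetric adj -> all (fun x => ~~ adj j x) b ->
  composable adj G (a ++ j :: b ++ j :: c) ->
  exists w', composable adj G w' /\ same_morph adj G (a ++ j :: b ++ j :: c) w' /\
             size w' < size (a ++ j :: b ++ j :: c).
Proof.
move=> sym Hb Co.
have E := @run_commute _ adj G j b a (j :: c) sym Hb.
have Co2 : composable adj G ((a ++ b) ++ [:: j; j] ++ c).
  by rewrite /composable -catA /= -E.
exists ((a ++ b) ++ c); split; last split.
- by rewrite /composable (run_R1 Co2).
- apply: rst_trans; first by apply: sm_commute.
  rewrite -catA /=; apply: rst_step.
  have := rstep_R1 Co2; rewrite -!catA /=; apply.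
  by rewrite /composable catA (run_R1 Co2).
- rewrite !size_cat /= ?size_cat /=; lia.
Qed.

Lemma reduce (V : finType) (adj : rel V) G : symmetric adj -> is_orient adj G ->
  forall n a b c j i, size b <= n -> composable adj G (a ++ j :: b ++ j :: c) ->
  j \notin b -> adj j i -> i \notin b ->
  exists w', composable adj G w' /\ same_morph adj G (a ++ j :: b ++ j :: c) w' /\
             size w' < size (a ++ j :: b ++ j :: c).
Proof.
move=> sym OG; elim=> [|n IH] a b c j i sb Co jb ji ib.
  by case: b sb Co jb ib => // _ Co _ _; apply: reduce_base.
case Hb: (all (fun x => ~~ adj j x) b); first by apply: reduce_base.
move/negbT: Hb; rewrite -has_predC => /hasP [k kb /negbNE jk].
case: (ltngtP (count_mem k b) 1) => ck.
- by move: kb; rewrite -has_pred1 has_count; case: (count _ b) ck.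
- have [b1 [b2 [b3 [Eb kb2]]]] := split2 ck.
  have E : a ++ j :: b ++ j :: c = (a ++ j :: b1) ++ k :: b2 ++ k :: (b3 ++ j :: c).
    by rewrite Eb -!catA /= -!catA.
  rewrite E; apply: (IH _ _ _ _ j) => //.
  + move: sb; rewrite Eb !size_cat /= ?size_cat /=; lia.
  + by rewrite -E.
  + by rewrite sym.
  + move: jb; rewrite Eb mem_cat in_cons mem_cat in_cons !negb_or.
    by case/and5P.
- exfalso.
  have Co' : composable adj G ((a ++ j :: b) ++ j :: c) by rewrite -catA.
  have [o1 [R1 [S1 [R1' _]]]] := split_run Co'.
  have Co'' : composable adj (refl_at o1 j) (a ++ j :: b).
    by move: Co'; rewrite /composable run_cat R1' /=.
  have [o3 [R3 [S3 _]]] := split_run Co''.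
  have Or : is_orient adj (refl_at o1 j) by apply: (run_orient sym OG R1').
  have ci : count_mem i b = 0 by apply/count_memPn.
  have := sos_break Or (sos_refl_same S1) jb R3 jk ji ck ci.
  by rewrite S3.
Qed.

Unset Implicit Arguments.

Theorem mainTheorem17 (V : finType) (adj : rel V) (G G0 : quiv V) (w : seq V) :
  is_tree adj -> 1 < #|V| ->
  is_orient adj G -> is_orient adj G0 -> alternating adj G0 ->
  reduced adj G w ->
  (run adj G w = Some G0 \/ run adj G w = Some (opp G0)) ->
  forall i, i \in w ->
    let pre := take (index i w) w in
    let P1 := forall j, adj i j -> j \notin pre in
    let P2 := forall j, adj i j -> count_mem j pre = 1 in
    (P1 /\ ~ P2) \/ (~ P1 /\ P2).
Proof.
move=> [sym irr conn _] card OG OG0 alt [Co Red] Hrun i iw.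
cbv zeta.
have [E Npre] := split1 iw.
set pre := take (index i w) w in E Npre *.
set suf := drop _ w in E.
have [F [RF altF]] : exists F, run adj G w = Some F /\ src_or_sink adj F i.
  case: Hrun => R; [exists G0 | exists (opp G0)]; split => //.
  have := alt i; rewrite /src_or_sink /is_source /is_sink orbC.
  by congr orb; apply: eq_forallb => k; rewrite ffunE.
have A : forall j, adj i j -> count_mem j pre <= 1.
  move=> j ij; rewrite leqNgt; apply/negP => cj.
  have [p1 [p2 [p3 [Ep jp2]]]] := split2 cj.
  have Ew : w = p1 ++ j :: p2 ++ j :: (p3 ++ i :: suf).
    by rewrite {1}E Ep -catA /= -catA.
  have ip2 : i \notin p2.
    move: Npre; rewrite Ep mem_cat in_cons mem_cat in_cons !negb_or.
    by case/and5P.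
  have Cw : composable adj G (p1 ++ j :: p2 ++ j :: (p3 ++ i :: suf)) by rewrite -Ew.
  have ji : adj j i by rewrite sym.
  have [w' [Cw' [Sw' Lw']]] :=
    reduce sym OG (leqnn (size p2)) Cw jp2 ji ip2.
  have := Red w' Cw'; rewrite Ew => /(_ Sw'); rewrite leqNgt Lw' //.
have Cw2 : composable adj G (pre ++ i :: suf) by rewrite -E.
have [o1 [R1 [S1 [R1' Rw]]]] := split_run Cw2.
have Or : is_orient adj (refl_at o1 i) by apply: (run_orient sym OG R1').
have B : forall j k, adj i j -> adj i k -> count_mem j pre = 1 -> count_mem k pre = 0 -> False.
  move=> j k ij ik cj ck.
  have RF' : run adj (refl_at o1 i) pre = Some F by rewrite -Rw -E.
  have := sos_break Or (sos_refl_same S1) Npre RF' ij ik cj ck.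
  by rewrite altF.
have [n ni] : exists n, adj i n.
  have [x [y [_ _ xy]]] := card_gt1P card.
  have [z zi] : exists z, z != i.
    case: (eqVneq x i) => [xi|xi]; last by exists x.
    by exists y; rewrite -xi eq_sym.
  have /connectP [p pp zl] := conn i z.
  case: p pp zl => [|q p] /=; first by move=> _ zeq; move: zi; rewrite zeq eqxx.
  by case/andP => iq _ _; exists q.
case: (boolP [exists j, adj i j && (j \in pre)]).
- case/existsP => j /andP [ij jp]; right; split.
  + by move/(_ j ij); rewrite jp.
  + move=> k ik; have := A k ik.
    case ck: (count_mem k pre) => [|[|m]] // _.
    have cj : count_mem j pre = 1.
      have := A j ij; move: jp; rewrite -has_pred1 has_count.
      by case: (count _ pre) => [|[|]].
    by case: (B j k ij ik cj ck).
- move=> /existsPn H; left; split.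
  + by move=> j ij; have := H j; rewrite ij.
  + move=> /(_ n ni); have := H n; rewrite ni /= => /count_memPn ->.
    by [].
Qed.
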